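(* Let $A\in \mathbb{R}^{m\times n}$ be such that $A^{\dagger}\geq 0$. Let $A=P_{1}-R_{1}+S_{1}$ be a regular proper double splitting of $A$ such that $P_{1}P_{1}^{\dagger}\geq 0$, and let $A=P_{2}-R_{2}+S_{2}$ be a weak regular proper double splitting of $A$. Define $$W_{1}=\begin{pmatrix} P_{1}^{\dagger}R_{1} & -P_{1}^{\dagger}S_{1}\\ I & 0\end{pmatrix},\qquad W_{2}=\begin{pmatrix} P_{2}^{\dagger}R_{2} & -P_{2}^{\dagger}S_{2}\\ I & 0\end{pmatrix}\in\mathbb{R}^{2n\times 2n},$$ where $I$ is the $n\times n$ identity matrix. If $P_{1}^{\dagger}\geq P_{2}^{\dagger}$ and at least one of the conditions (i) $P_{1}^{\dagger}R_{1}\geq P_{2}^{\dagger}R_{2}$, (ii) $P_{1}^{\dagger}S_{1}\geq P_{2}^{\dagger}S_{2}$ holds, then $\rho(W_{1})\leq \rho(W_{2})< 1$.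
   Context: $A^{\dagger}$ denotes the Moore–Penrose inverse of $A$. For real matrices, $B\geq 0$ means all entries of $B$ are nonnegative, and $B\geq C$ means $B-C\geq 0$. $\rho(\cdot)$ denotes the spectral radius. For $A\in\mathbb{R}^{m\times n}$, a decomposition $A=P-R+S$ with $P,R,S\in\mathbb{R}^{m\times n}$ is a proper double splitting if $\mathcal{R}(A)=\mathcal{R}(P)$ and $\mathcal{N}(A)=\mathcal{N}(P)$ (range and null space). A proper double splitting is called regular if $P^{\dagger}\geq 0$, $R\geq 0$ and $-S\geq 0$; it is called weak regular if $P^{\dagger}\geq 0$, $P^{\dagger}R\geq 0$ and $-P^{\dagger}S\geq 0$. *)

(* Defs.v *)
From HB Require Import structures.
From mathcomp Require Import all_boot all_order all_algebra.
From mathcomp Require Import reals.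
From mathcomp Require Import complex.
Set Implicit Arguments. Unset Strict Implicit. Unset Printing Implicit Defensive.
Import Order.TTheory GRing.Theory Num.Theory.
Local Open Scope ring_scope.

Section Defs.
Variable R : realType.

Definition mx_nonneg m n (B : 'M[R]_(m, n)) : Prop := forall i j, 0 <= B i j.

(* X is the Moore-Penrose inverse of A (Penrose equations; real case, so
   conjugate transpose = transpose) *)
Definition is_MP_inverse m n (A : 'M[R]_(m, n)) (X : 'M[R]_(n, m)) : Prop :=
  [/\ A *m X *m A = A, X *m A *m X = X,
      (A *m X)^T = A *m X & (X *m A)^T = X *m A].

Definition same_range m n (A P : 'M[R]_(m, n)) : Prop :=
  forall y : 'cV[R]_m, (exists x : 'cV[R]_n, y = A *m x) <-> (exists x : 'cV[R]_n, y = P *m x).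

Definition same_null m n (A P : 'M[R]_(m, n)) : Prop :=
  forall x : 'cV[R]_n, A *m x = 0 <-> P *m x = 0.

Definition proper_double_splitting m n (A P Rm S : 'M[R]_(m, n)) : Prop :=
  [/\ A = P - Rm + S, same_range A P & same_null A P].

(* complex eigenvalues (with multiplicity) of a real square matrix:
   the roots in R[i] of its characteristic polynomial *)
Definition eigenvalues_C n (M : 'M[R]_n) : seq R[i] :=
  sval (closed_field_poly_normal (char_poly (map_mx (fun x : R => x%:C%C) M))).

(* spectral radius: maximum modulus (real part of the complex norm, which is real) of the complex eigenvalues (0 if n = 0) *)
Definition spectral_radius n (M : 'M[R]_n) : R :=
  \big[Num.max/0]_(z <- eigenvalues_C M) complex.Re `|z|.

End Defs.

(* Main.v *)
Require Import Defs.
From HB Require Import structures.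
From mathcomp Require Import all_boot all_order all_algebra.
From mathcomp Require Import reals.
From mathcomp Require Import complex.
From mathcomp.algebra_tactics Require Import ring lra.
Set Implicit Arguments. Unset Strict Implicit. Unset Printing Implicit Defensive.
Import Order.TTheory GRing.Theory Num.Theory.
Local Open Scope ring_scope.

Section P1.
Variable R : realType.

Lemma nn_add m n (A B : 'M[R]_(m,n)) : mx_nonneg A -> mx_nonneg B -> mx_nonneg (A + B).
Proof. by move=> hA hB i j; rewrite mxE addr_ge0. Qed.

Lemma nn_mul m n p (A : 'M[R]_(m,n)) (B : 'M[R]_(n,p)) :
  mx_nonneg A -> mx_nonneg B -> mx_nonneg (A *m B).
Proof. move=> hA hB i j; rewrite mxE; apply: sumr_ge0 => l _; exact: mulr_ge0. Qed.

Lemma nn_scale m n a (A : 'M[R]_(m,n)) : 0 <= a -> mx_nonneg A -> mx_nonneg (a *: A).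
Proof. by move=> ha hA i j; rewrite mxE mulr_ge0. Qed.

Lemma nn1 n : mx_nonneg (1%:M : 'M[R]_n).
Proof. by move=> i j; rewrite mxE ler0n. Qed.

Lemma nn0 m n : mx_nonneg (0 : 'M[R]_(m,n)).
Proof. by move=> i j; rewrite mxE. Qed.

Lemma neumann N (M X : 'M[R]_N) c :
  mx_nonneg M -> (forall i j, M i j <= c) -> N%:R * c <= 2^-1 ->
  X = 1%:M + X *m M -> mx_nonneg X.
Proof.
move=> hM hc hNc hX.
set b := \sum_i \sum_j `|X i j|.
have hb: forall i j, `|X i j| <= b.
  move=> i j; rewrite /b (bigD1 i) //= (bigD1 j) //= -addrA lerDl.
  by apply: addr_ge0; apply: sumr_ge0 => *; rewrite ?sumr_ge0.
have b0 : 0 <= b by apply: sumr_ge0 => *; rewrite sumr_ge0.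
have key: forall k : nat, forall i j, - (b / 2^+k) <= X i j.
  elim=> [|k IH] i j.
    by rewrite expr0 divr1; have := hb i j; rewrite ler_norml => /andP[].
  rewrite hX !mxE.
  have hs: \sum_l M l j <= N%:R * c.
    apply: le_trans (_ : \sum_(l < N) c <= _); first by apply: ler_sum => l _.
    by rewrite sumr_const card_ord mulr_natl.
  have hs0: 0 <= \sum_l M l j by apply: sumr_ge0.
  have h1: (- (b / 2^+k)) * \sum_l M l j <= \sum_l X i l * M l j.
    rewrite mulr_sumr; apply: ler_sum => l _; apply: ler_wpM2r => //; exact: IH.
  have h2: - (b / 2^+k.+1) <= (- (b / 2^+k)) * \sum_l M l j.
    have e: b / 2^+k.+1 = (b / 2^+k) / 2 by rewrite exprS invfM mulrCA mulrA [_ * 2^-1]mulrC -!mulrA.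
    rewrite e.
    have p0: 0 <= b / 2^+k by rewrite divr_ge0 // exprn_ge0.
    set B := b / 2^+k in p0 *; set S := \sum_l M l j in hs hs0 *.
    have hS : S <= 2^-1 by apply: le_trans hNc.
    by rewrite mulNr lerN2 ler_wpM2l.
  have h3: 0 <= (i == j)%:R :> R by rewrite ler0n.
  lra.
move=> i j; rewrite leNgt; apply/negP => hneg.
set x := - X i j.
have x0 : 0 < x by rewrite /x oppr_gt0.
pose k := Num.bound (b / x).
have hk : b / x < k%:R by apply: archi_boundP; rewrite divr_ge0 // ltW.
have h2k : (k%:R : R) <= 2 ^+ k.
  by rewrite -natrX ler_nat; apply: ltnW; apply: ltn_expl.
have := key k i j.
have p2 : 0 < (2 : R) ^+ k by rewrite exprn_gt0.
have : b < x * 2 ^+ k.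
  have := hk; rewrite ltr_pdivrMr // => h; apply: lt_le_trans h _.
  by rewrite mulrC; apply: ler_wpM2l => //; exact: ltW.
move=> hb2 hh.
have: b / 2^+k < x by rewrite ltr_pdivrMr // mulrC.
rewrite /x in hh *; lra.
Qed.

End P1.

Section P2.
Variable R : realType.

Definition pbound (p : {poly R}) (M : R) := \sum_(i < size p) `|p`_i| * M ^+ i.

Lemma pbound_ge0 p M : 0 <= M -> 0 <= pbound p M.
Proof. move=> hM; apply: sumr_ge0 => i _; by rewrite mulr_ge0 ?exprn_ge0. Qed.

Lemma poly_bound (p : {poly R}) (M t : R) : `|t| <= M -> `|p.[t]| <= pbound p M.
Proof.
move=> ht; rewrite horner_coef; apply: le_trans (ler_norm_sum _ _ _) _.
apply: ler_sum => i _; rewrite normrM normrX; apply: ler_wpM2l => //.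
by apply: lerXn2r => //; rewrite nnegrE // (le_trans _ ht).
Qed.

Lemma poly_rcont (p : {poly R}) a :
  (forall t, a < t -> t < a + 1 -> 0 <= p.[t]) -> 0 <= p.[a].
Proof.
move=> hp; rewrite leNgt; apply/negP => hneg.
have : root (p - p.[a]%:P) a by rewrite rootE !hornerE subrr.
case/factor_theorem => q hq.
have hpt : forall t, p.[t] = p.[a] + q.[t] * (t - a).
  move=> t; have := congr1 (horner^~ t) hq; rewrite !hornerE => <-.
  by rewrite addrC subrK.
set C := pbound q (`|a| + 1).
have C0 : 0 <= C by apply: pbound_ge0; rewrite addr_ge0.
set P := - p.[a].
have P0 : 0 < P by rewrite /P oppr_gt0.
set e := P / (2 * (C + 1 + P)).
have hd : 0 < 2 * (C + 1 + P) by lra.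
have E : e * (2 * (C + 1 + P)) = P by rewrite /e divfK // gt_eqF.
have e0 : 0 < e by rewrite /e divr_gt0.
have e1 : e < 1 by nra.
have ht1 : a < a + e by lra.
have ht2 : a + e < a + 1 by lra.
have := hp _ ht1 ht2; rewrite hpt.
have hq1 : `|q.[a + e]| <= C.
  apply: poly_bound; apply: le_trans (ler_normD _ _) _.
  by rewrite lerD2l ger0_norm ?ltW.
have hq2 : q.[a + e] <= C by apply: le_trans (ler_norm _) hq1.
have -> : a + e - a = e by ring.
rewrite /P in P0 E e1 e0 *.
nra.
Qed.

End P2.

Section P3.
Variable R : realType.
Local Notation C := (R[i]).

Definition toC (x : R) : C := x%:C%C.

Lemma normcRe (z : C) : `|z| = ((complex.Re `|z|)%:C)%C.
Proof. by rewrite normc_def. Qed.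

Lemma nc_ge0 (z : C) : 0 <= complex.Re `|z|.
Proof. by rewrite -ler0c -normcRe. Qed.

Lemma normC_real (a : R) : `|a%:C%C| = (`|a|%:C)%C :> C.
Proof.
case: (Order.TotalTheory.leP 0 a) => ha.
  by rewrite !ger0_norm // ler0c.
rewrite !ltr0_norm ?ltcR //; by rewrite rmorphN.
Qed.

Lemma charC_eq n (M : 'M[R]_n) :
  char_poly (map_mx (fun x : R => x%:C%C) M) = \prod_(z <- eigenvalues_C M) ('X - z%:P).
Proof.
rewrite /eigenvalues_C; case: closed_field_poly_normal => s /= hs.
by rewrite {1}hs (monicP (char_poly_monic _)) scale1r.
Qed.

Lemma size_eig n (M : 'M[R]_n) : size (eigenvalues_C M) = n.
Proof.
have := size_char_poly (map_mx (fun x : R => x%:C%C) M).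
by rewrite charC_eq size_prod_XsubC => -[].
Qed.

Lemma eig_root n (M : 'M[R]_n) z :
  (z \in eigenvalues_C M) = root (char_poly (map_mx (fun x : R => x%:C%C) M)) z.
Proof. by rewrite charC_eq root_prod_XsubC. Qed.

Lemma map_charC n (M : 'M[R]_n) :
  map_poly (real_complex R) (char_poly M) = char_poly (map_mx (fun x : R => x%:C%C) M).
Proof. by rewrite map_char_poly. Qed.

Lemma sr_ge0 n (M : 'M[R]_n) : 0 <= spectral_radius M.
Proof.
rewrite /spectral_radius; elim: (eigenvalues_C M) => [|z s IH]; first by rewrite big_nil.
by rewrite big_cons le_max IH orbT.
Qed.

Lemma sr_ub n (M : 'M[R]_n) z : z \in eigenvalues_C M -> complex.Re `|z| <= spectral_radius M.
Proof.
rewrite /spectral_radius; elim: (eigenvalues_C M) => [|y s IH] //.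
rewrite inE big_cons le_max => /orP[/eqP ->|/IH ->]; by rewrite ?lexx ?orbT.
Qed.

Lemma sr_attained n (M : 'M[R]_n) : 0 < spectral_radius M ->
  exists2 z, z \in eigenvalues_C M & complex.Re `|z| = spectral_radius M.
Proof.
rewrite /spectral_radius; elim: (eigenvalues_C M) => [|y s IH]; first by rewrite big_nil ltxx.
rewrite big_cons; case: (leP (complex.Re `|y|) (\big[Num.max/0]_(j <- s) complex.Re `|j|)) => h.
  move=> /IH [z zs hz]; exists z => //; by rewrite inE zs orbT.
move=> _; exists y => //; by rewrite inE eqxx.
Qed.

Lemma sr_lt n (M : 'M[R]_n) s : 0 < s -> (forall z, z \in eigenvalues_C M -> complex.Re `|z| < s) ->
  spectral_radius M < s.
Proof.
rewrite /spectral_radius => s0; elim: (eigenvalues_C M) => [|y l IH] h; first by rewrite big_nil.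
rewrite big_cons gt_max h ?inE ?eqxx // IH // => z zl; apply: h; by rewrite inE zl orbT.
Qed.

Lemma eig_vec n (M : 'M[R]_n) z : z \in eigenvalues_C M ->
  exists2 v : 'rV[C]_n, v *m map_mx (fun x : R => x%:C%C) M = z *: v & v != 0.
Proof. by rewrite eig_root -eigenvalue_root_char => /eigenvalueP. Qed.

Lemma charpoly_horner n (M : 'M[R]_n) t : (char_poly M).[t] = \det (t%:M - M).
Proof.
rewrite /char_poly -[_.[t]]/(horner_eval t _) -det_map_mx; congr (\det _).
apply/matrixP => i j; rewrite !mxE /=.
by rewrite rmorphB /= rmorphMn /= horner_evalE hornerX horner_evalE hornerC.
Qed.

Lemma prod_lb (s : seq C) (r t : R) : 0 <= r -> r <= t ->
  (forall z, z \in s -> complex.Re `|z| <= r) ->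
  (((t - r) ^+ size s)%:C)%C <= \prod_(z <- s) `|('X - z%:P).[t%:C%C]|.
Proof.
move=> r0 ht; elim: s => [|y s IH] hs; first by rewrite big_nil expr0.
rewrite big_cons /= exprS rmorphM /=.
have hy : complex.Re `|y| <= r by apply: hs; rewrite inE eqxx.
apply: ler_pM.
- by rewrite ler0c subr_ge0.
- by rewrite rmorphXn /= exprn_ge0 // ler0c subr_ge0.
- rewrite hornerXsubC; apply: le_trans (lerB_dist _ _).
  rewrite /= ger0_norm ?ler0c ?(le_trans r0) // [`|y|]normcRe -rmorphB /= lecR.
  change (t - r <= t - complex.Re `|y|); lra.
- apply: IH => z zs; apply: hs; by rewrite inE zs orbT.
Qed.

Lemma det_lb n (M : 'M[R]_n) t : spectral_radius M <= t ->
  (t - spectral_radius M) ^+ n <= `|(char_poly M).[t]|.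
Proof.
move=> ht; set r := spectral_radius M.
have r0 : 0 <= r := sr_ge0 M.
rewrite -lecR -normC_real -(horner_map (real_complex R)) map_charC charC_eq.
rewrite horner_prod normr_prod.
have := prod_lb r0 ht (fun z => @sr_ub n M z); by rewrite size_eig.
Qed.

End P3.

Section P4.
Variable R : realType.
Local Notation C := (R[i]).

Lemma absvec n (M : 'M[R]_n) z (v : 'rV[C]_n) : mx_nonneg M ->
  v *m map_mx (fun x : R => x%:C%C) M = z *: v -> v != 0 ->
  let w := \row_j complex.Re `|v 0 j| in
  [/\ mx_nonneg w, (exists j, 0 < w 0 j) &
      (forall j, complex.Re `|z| * w 0 j <= (w *m M) 0 j)].
Proof.
move=> hM hv vn0 w; split.
- by move=> i j; rewrite mxE nc_ge0.
- case: (pickP (fun j => v 0 j != 0)) => [j hj|h].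
    exists j; rewrite mxE -ltcR -normcRe normr_gt0; exact: hj.
  case/negP: vn0; apply/eqP/rowP => j; move: (h j) => /negbFE /eqP ->.
  by rewrite mxE.
- move=> j; have e := hv; move/rowP: e => /(_ j); rewrite !mxE => e.
  rewrite -lecR rmorphM /= -!normcRe -normrM -e rmorph_sum /=.
  apply: le_trans (ler_norm_sum _ _ _) _; apply: ler_sum => i _.
  by rewrite !mxE normrM rmorphM /= -normcRe normC_real (ger0_norm (hM i j)).
Qed.

Lemma cpm_ev n (B : 'M[R]_n) t : map_mx (horner_eval t) (char_poly_mx B) = t%:M - B.
Proof.
apply/matrixP => i j; rewrite !mxE /=.
by rewrite rmorphB /= rmorphMn /= horner_evalE hornerX horner_evalE hornerC.
Qed.

Lemma det_ev n (B : 'M[R]_n) t : \det (t%:M - B) = (char_poly B).[t].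
Proof. by rewrite charpoly_horner. Qed.

Lemma unit_t n (B : 'M[R]_n) t : spectral_radius B < t -> (t%:M - B) \in unitmx.
Proof.
move=> ht; rewrite unitmxE unitfE det_ev -normr_gt0.
apply: lt_le_trans (det_lb (ltW ht)); by rewrite exprn_gt0 // subr_gt0.
Qed.

Definition Rt n (B : 'M[R]_n) t := invmx (t%:M - B).

Lemma adj_ev n (B : 'M[R]_n) t i j :
  \adj (t%:M - B) i j = (\adj (char_poly_mx B) i j).[t].
Proof. by rewrite -cpm_ev -map_mx_adj mxE. Qed.

Lemma Rt_bound n (B : 'M[R]_n) s T : spectral_radius B < s -> 0 <= s -> s <= T ->
  exists K, 0 <= K /\ forall t, s <= t -> t <= T -> forall i j, `|Rt B t i j| <= K.
Proof.
move=> hs s0 sT.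
set D := (s - spectral_radius B) ^+ n.
have D0 : 0 < D by rewrite exprn_gt0 // subr_gt0.
set S := \sum_i \sum_j pbound (\adj (char_poly_mx B) i j) T.
have T0 : 0 <= T by apply: le_trans sT.
have S0 : 0 <= S.
  by apply: sumr_ge0 => i _; apply: sumr_ge0 => j _; apply: pbound_ge0.
exists (S / D); split; first by apply: divr_ge0 => //; exact: ltW.
move=> t st tT i j.
have ht : spectral_radius B < t by apply: lt_le_trans st.
rewrite /Rt /invmx (unit_t ht) mxE normrM normrV ?unitfE; last first.
  by rewrite -unitfE -unitmxE unit_t.
have hd : D <= `|\det (t%:M - B)|.
  rewrite det_ev; apply: le_trans (det_lb (ltW ht)).
  by apply: lerXn2r; rewrite ?nnegrE; lra.
have hd0 : 0 < `|\det (t%:M - B)| by apply: lt_le_trans hd.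
have ha : `|\adj (t%:M - B) i j| <= S.
  rewrite adj_ev; apply: le_trans (poly_bound _ (_ : `|t| <= T)) _.
    by rewrite ger0_norm // (le_trans s0).
  rewrite /S (bigD1 i) //= (bigD1 j) //= -addrA lerDl.
  apply: addr_ge0; apply: sumr_ge0 => k _ //; first by rewrite pbound_ge0.
  by apply: sumr_ge0 => l _; rewrite pbound_ge0.
rewrite mulrC; apply: ler_pM => //; first by rewrite invr_ge0 ltW.
by rewrite lef_pV2 ?posrE.
Qed.

End P4.

Section P5.
Variable R : realType.

Lemma scal_sub n (a b : R) (B : 'M[R]_n) : (a + b)%:M - B = (a%:M - B) + b%:M.
Proof. by apply/matrixP => i j; rewrite !mxE mulrnDl addrAC. Qed.

Lemma resolvent_nn n (B : 'M[R]_n) t : mx_nonneg B -> spectral_radius B < t ->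
  mx_nonneg (Rt B t).
Proof.
move=> hB ht.
have r0 := sr_ge0 B.
have t0 : 0 < t by apply: le_lt_trans ht.
set mB := \sum_i \sum_j B i j.
have hmB : forall i j, B i j <= mB.
  move=> i j; rewrite /mB (bigD1 i) //= (bigD1 j) //= -addrA lerDl.
  by apply: addr_ge0; apply: sumr_ge0 => *; rewrite ?sumr_ge0.
have mB0 : 0 <= mB by apply: sumr_ge0 => *; rewrite sumr_ge0.
have [T hT] : exists T, T = t + 1 + 2 * n%:R * mB by eexists.
have n0 : 0 <= n%:R :> R by rewrite ler0n.
have hnm : 0 <= n%:R * mB by rewrite mulr_ge0.
have [K [K0 hK]] := @Rt_bound R n B t (T + 1) ht (ltW t0) ltac:(lra).
set d := (2 * (n%:R + 1) * (K + 1))^-1.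
have dpos : 0 < 2 * (n%:R + 1) * (K + 1) by rewrite !mulr_gt0 //; lra.
have d0 : 0 < d by rewrite invr_gt0.
have dE : d * (2 * (n%:R + 1) * (K + 1)) = 1 by rewrite mulVf ?gt_eqF.
have d1 : d <= 1 by nra.
have claim : forall k : nat, forall u, t <= u -> T - k%:R * d <= u -> mx_nonneg (Rt B u).
  elim=> [|k IH] u tu.
    rewrite mul0r subr0 => Tu.
    have hu : spectral_radius B < u by apply: lt_le_trans tu.
    have u0 : 0 < u by lra.
    have U := unit_t hu.
    have hV := mulVmx U; rewrite mulmxBr mul_mx_scalar in hV.
    set X := u *: Rt B u.
    set M := u^-1 *: B.
    have e1 : X *m M = Rt B u *m B.
      by rewrite /X /M -scalemxAl -scalemxAr scalerA mulfV ?gt_eqF // scale1r.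
    have hX : X = 1%:M + X *m M by rewrite e1 -hV subrK.
    have : mx_nonneg X.
      apply: (@neumann R n M X (mB / T)) => //.
      - by apply: nn_scale => //; rewrite invr_ge0 ltW.
      - move=> i j; rewrite mxE; apply: (@le_trans _ _ (u^-1 * mB)).
          by apply: ler_wpM2l; [rewrite invr_ge0; exact: ltW | exact: hmB].
        rewrite mulrC; apply: ler_wpM2l => //.
        by rewrite lef_pV2 ?posrE //; lra.
      - rewrite mulrA ler_pdivrMr; last by lra.
        lra.
    move=> hXn; have -> : Rt B u = u^-1 *: X by rewrite /X scalerA mulVf ?gt_eqF // scale1r.
    by apply: nn_scale => //; rewrite invr_ge0 ltW.
  move=> hk.
  case: (Order.TotalTheory.leP (T - k%:R * d) u) => hku; first exact: IH.
  set u' := u + d.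
  have hu : spectral_radius B < u by apply: lt_le_trans tu.
  have U := unit_t hu.
  have hu' : spectral_radius B < u' by rewrite /u'; lra.
  have U' := unit_t hu'.
  have hR' : mx_nonneg (Rt B u').
    apply: IH; rewrite /u'; first lra.
    move: hk; rewrite -addn1 natrD; lra.
  have hkn : 0 <= k%:R :> R by rewrite ler0n.
  have hu'T : u' <= T + 1 by rewrite /u'; nra.
  set X := Rt B u *m (u'%:M - B).
  set M := d *: Rt B u'.
  have eX : X = 1%:M + d *: Rt B u.
    by rewrite /X /u' scal_sub mulmxDr mulVmx // mul_mx_scalar.
  have eXR : X *m Rt B u' = Rt B u by rewrite /X -mulmxA mulmxV // mulmx1.
  have hX : X = 1%:M + X *m M.
    by rewrite /M -scalemxAr eXR eX.
  have : mx_nonneg X.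
    apply: (@neumann R n M X (d * K)) => //.
    - exact: nn_scale (ltW d0) hR'.
    - move=> i j; rewrite mxE; apply: ler_wpM2l; first exact: ltW.
      apply: le_trans (ler_norm _) _; apply: hK => //; rewrite /u'; lra.
    - nra.
  by move=> hXn; rewrite -eXR; apply: nn_mul.
pose k := Num.bound ((T - t) / d).
have hk : (T - t) / d < k%:R by apply: archi_boundP; rewrite divr_ge0 // ?ltW //; lra.
apply: (claim k) => //.
have : T - t < k%:R * d by rewrite -ltr_pdivrMr.
lra.
Qed.

End P5.

Section P6.
Variable R : realType.

Lemma cw n (B : 'M[R]_n) (x : 'cV[R]_n) r : mx_nonneg B -> mx_nonneg x -> x != 0 ->
  (forall i, r * x i 0 <= (B *m x) i 0) -> r <= spectral_radius B.
Proof.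
move=> hB hx xn0 hr; rewrite leNgt; apply/negP => hlt.
have U := unit_t hlt.
have hRn := resolvent_nn hB hlt.
set y := (r%:M - B) *m x.
have hy : forall i, y i 0 <= 0.
  move=> i; have := hr i; rewrite /y mulmxBl mul_scalar_mx !mxE => h; lra.
have ex : x = Rt B r *m y by rewrite /Rt /y mulKmx.
case/negP: xn0; apply/eqP/matrixP => i j; rewrite (ord1 j) [RHS]mxE.
apply/le_anti/andP; split; last exact: hx.
rewrite ex mxE.
have : \sum_l Rt B r i l * y l 0 <= \sum_(l < n) (0:R).
  by apply: ler_sum => l _; apply: mulr_ge0_le0.
by rewrite big1_eq.
Qed.

Lemma mult_decomp m n (a : R) : forall s (G : 'M[{poly R}]_(m,n)),
  (forall i j, (size (G i j) <= s)%N) -> G != 0 ->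
  exists k, exists H : 'M[{poly R}]_(m,n),
    G = ('X - a%:P)^+k *: H /\ map_mx (horner_eval a) H != 0.
Proof.
elim=> [|s IH] G hs hG.
  case/negP: hG; apply/eqP/matrixP => i j; rewrite mxE; apply/eqP.
  by rewrite -size_poly_eq0 -leqn0.
case: (boolP (map_mx (horner_eval a) G == 0)) => h0; last first.
  by exists 0%N, G; rewrite expr0 scale1r.
set Q := map_mx (fun p => p %/ ('X - a%:P)) G.
have hr : forall i j, root (G i j) a.
  move=> i j; move/eqP/matrixP: h0 => /(_ i j); rewrite !mxE /= horner_evalE => h.
  by rewrite rootE h.
have eG : G = ('X - a%:P) *: Q.
  apply/matrixP => i j; rewrite !mxE mulrC divpK //; by rewrite -root_factor_theorem.
have hQ : Q != 0.
  apply/negP => /eqP hQ0; case/negP: hG; by rewrite eG hQ0 scaler0.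
have hsQ : forall i j, (size (Q i j) <= s)%N.
  move=> i j; rewrite mxE size_divp ?polyXsubC_eq0 // size_XsubC /= subn1.
  by have := hs i j; case: (size (G i j)).
have [k [H [eQ hH]]] := IH Q hsQ hQ.
exists k.+1, H; split => //; by rewrite eG eQ scalerA exprS.
Qed.

End P6.

Section P7.
Variable R : realType.

Lemma pf n (B : 'M[R]_n) : mx_nonneg B -> 0 < spectral_radius B ->
  exists2 x : 'cV[R]_n, mx_nonneg x /\ x != 0 & B *m x = spectral_radius B *: x.
Proof.
move=> hB hr.
have [z zin hz] := sr_attained hr.
have [v hv vn0] := eig_vec zin.
have [hw [j0 hj0] hwB] := absvec hB hv vn0.
move: hw hj0 hwB; set w := \row_j complex.Re `|v 0 j| => hw hj0 hwB.
rewrite hz in hwB.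
move Er : (spectral_radius B) => r; rewrite Er in hr hwB.
have hRt : forall u, r < u -> mx_nonneg (Rt B u).
  by move=> u hu; apply: resolvent_nn => //; rewrite Er.
have hU : forall u, r < u -> (u%:M - B) \in unitmx by move=> u hu; apply: unit_t; rewrite Er.
set Cm := char_poly_mx B.
set d := char_poly B.
have hCF : Cm *m \adj Cm = d%:M := mul_mx_adj Cm.
set G := d *: \adj Cm.
have hCG : Cm *m G = (d * d)%:M by rewrite /G -scalemxAr hCF scale_scalar_mx.
have dn0 : d != 0 by apply: monic_neq0; apply: char_poly_monic.
have hG0 : G != 0.
  apply/negP => /eqP G0; move: hCG; rewrite G0 mulmx0 => /matrixP /(_ j0 j0).
  rewrite !mxE eqxx mulr1n => h.
  have : d * d != 0 by rewrite mulf_neq0.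
  by rewrite -h eqxx.
have hsz : forall i j, (size (G i j) <= \sum_i \sum_j size (G i j))%N.
  move=> i j; rewrite (bigD1 i) //= (bigD1 j) //= -addnA; exact: leq_addr.
have [k [H [eG hH]]] := mult_decomp r hsz hG0.
set e := (Cm *m H) j0 j0.
have hXk : ('X - r%:P) ^+ k != 0 by apply: expf_neq0; rewrite polyXsubC_eq0.
have h1 : ('X - r%:P) ^+ k *: (Cm *m H) = (d * d)%:M by rewrite scalemxAr -eG hCG.
have hde : ('X - r%:P) ^+ k * e = d * d.
  by move/matrixP: h1 => /(_ j0 j0); rewrite [LHS]mxE [RHS]mxE eqxx mulr1n.
have hCH : Cm *m H = e%:M.
  apply/matrixP => i j; apply: (mulfI hXk).
  move/matrixP: h1 => /(_ i j); rewrite [LHS]mxE [RHS]mxE => ->.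
  by rewrite [e%:M i j]mxE -hde mulrnAr.
have hEv : forall u, (u%:M - B) *m map_mx (horner_eval u) H = (e.[u])%:M.
  by move=> u; rewrite -cpm_ev -map_mxM -/Cm hCH map_scalar_mx.
have hGev : forall u, map_mx (horner_eval u) G = ((u - r) ^+ k) *: map_mx (horner_eval u) H.
  by move=> u; rewrite eG map_mxZ /= horner_evalE horner_exp hornerXsubC.
have hGev2 : forall u, r < u -> map_mx (horner_eval u) G = (d.[u] * d.[u]) *: Rt B u.
  move=> u hu; have U := hU u hu.
  have dun0 : d.[u] != 0 by rewrite -det_ev -unitfE -unitmxE.
  rewrite /G map_mxZ /= horner_evalE map_mx_adj /Cm cpm_ev /Rt /invmx U det_ev.
  by rewrite scalerA -mulrA mulfV // mulr1.
have hHnn : forall u, r < u -> mx_nonneg (map_mx (horner_eval u) H).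
  move=> u hu.
  have hk0 : 0 < (u - r) ^+ k by rewrite exprn_gt0 // subr_gt0.
  have -> : map_mx (horner_eval u) H = ((u - r) ^+ k)^-1 *: map_mx (horner_eval u) G.
    by rewrite hGev scalerA mulVf ?gt_eqF // scale1r.
  apply: nn_scale; first by rewrite invr_ge0 ltW.
  rewrite hGev2 //; apply: nn_scale; first by rewrite -expr2 sqr_ge0.
  exact: hRt.
have heu : forall u, r < u -> 0 <= e.[u].
  move=> u hu; have hk0 : 0 < (u - r) ^+ k by rewrite exprn_gt0 // subr_gt0.
  have := congr1 (horner^~ u) hde; rewrite !hornerM horner_exp hornerXsubC => E.
  by rewrite -(pmulr_rge0 _ hk0) E -expr2 sqr_ge0.
have hH0 : mx_nonneg (map_mx (horner_eval r) H).
  move=> i j; rewrite mxE /= horner_evalE; apply: poly_rcont => u hu1 hu2.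
  by have := hHnn u hu1 i j; rewrite mxE /= horner_evalE.
have he0 : 0 <= e.[r] by apply: poly_rcont => u hu1 hu2; exact: heu.
have hwineq : forall u, r < u -> forall j,
    e.[u] * w 0 j <= (u - r) * (w *m map_mx (horner_eval u) H) 0 j.
  move=> u hu j.
  set Hu := map_mx (horner_eval u) H.
  set y := w *m (u%:M - B).
  have hy : forall i, y 0 i <= (u - r) * w 0 i.
    move=> i; have := hwB i; rewrite /y mulmxBr mul_mx_scalar !mxE => h; lra.
  have : (y *m Hu) 0 j = e.[u] * w 0 j.
    by rewrite /y -mulmxA hEv mul_mx_scalar mxE.
  move=> <-; rewrite !mxE mulr_sumr; apply: ler_sum => i _.
  rewrite mulrA; apply: ler_wpM2r; [exact: (hHnn u hu) | exact: hy].
set g := ('X - r%:P) * \sum_i (w 0 i)%:P * H i j0 - e * (w 0 j0)%:P.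
have hg : forall u, g.[u] = (u - r) * (w *m map_mx (horner_eval u) H) 0 j0 - e.[u] * w 0 j0.
  move=> u; rewrite /g hornerD hornerN !hornerM hornerXsubC hornerC horner_sum mxE.
  congr (_ * _ - _); rewrite mxE; apply: eq_bigr => i _.
  by rewrite hornerM hornerC; congr (_ * _); rewrite mxE.
have hgr : 0 <= g.[r].
  apply: poly_rcont => u hu1 hu2; rewrite hg subr_ge0; exact: hwineq.
rewrite hg subrr mul0r sub0r oppr_ge0 in hgr.
have er0 : e.[r] = 0.
  apply/le_anti/andP; split => //.
  nra.
have hker : (r%:M - B) *m map_mx (horner_eval r) H = 0.
  by rewrite hEv er0; apply/matrixP => i j; rewrite !mxE mul0rn.
case: (pickP (fun j => col j (map_mx (horner_eval r) H) != 0)) => [j hj|hnone]; last first.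
  case/negP: hH; apply/eqP/matrixP => i j; have := hnone j => /negbFE /eqP.
  by move/matrixP => /(_ i 0); rewrite !mxE.
exists (col j (map_mx (horner_eval r) H)); first split => //.
  by move=> i l; rewrite !mxE; have := hH0 i j; rewrite mxE.
have hx : (r%:M - B) *m col j (map_mx (horner_eval r) H) = 0.
  by rewrite colE mulmxA hker mul0mx.
move: hx; rewrite mulmxBl mul_scalar_mx => /eqP; rewrite subr_eq0 => /eqP <-.
by [].
Qed.

End P7.

Section P8.
Variable R : realType.

Lemma nn_block m1 m2 n1 n2 (A : 'M[R]_(m1,n1)) (B : 'M[R]_(m1,n2)) (C : 'M[R]_(m2,n1)) (D : 'M[R]_(m2,n2)) :
  mx_nonneg A -> mx_nonneg B -> mx_nonneg C -> mx_nonneg D -> mx_nonneg (block_mx A B C D).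
Proof.
move=> hA hB hC hD i j.
case: (split_ordP i) => k ->; case: (split_ordP j) => l ->.
- by rewrite block_mxEul.
- by rewrite block_mxEur.
- by rewrite block_mxEdl.
- by rewrite block_mxEdr.
Qed.

Lemma null_mx m n k (A P : 'M[R]_(m,n)) (M : 'M[R]_(n,k)) :
  same_null A P -> P *m M = 0 -> A *m M = 0.
Proof.
move=> hN hPM; apply/matrixP => i j.
have h1 : P *m col j M = 0 by rewrite colE mulmxA hPM mul0mx.
have hc : col j (A *m M) = 0 by rewrite colE -mulmxA -colE; exact: (hN (col j M)).2 h1.
by move: hc => /matrixP /(_ i 0); rewrite !mxE.
Qed.

Lemma range_mx m n (A P : 'M[R]_(m,n)) (Pd : 'M[R]_(n,m)) :
  same_range A P -> P *m Pd *m P = P -> P *m Pd *m A = A.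
Proof.
move=> hR hP; apply/matrixP => i j.
have [x hx] : exists x, col j A = P *m x by apply/(hR (col j A)); exists (delta_mx j 0); rewrite colE.
have hc : col j (P *m Pd *m A) = col j A by rewrite colE -mulmxA -colE hx mulmxA hP.
by move: hc => /matrixP /(_ i 0); rewrite !mxE.
Qed.

Lemma proj m n (A P : 'M[R]_(m,n)) (Ad Pd : 'M[R]_(n,m)) :
  is_MP_inverse A Ad -> same_range A P -> same_null A P -> is_MP_inverse P Pd ->
  Pd *m P = Ad *m A /\ P *m Pd = A *m Ad.
Proof.
move=> [a1 a2 a3 a4] hR hN [p1 p2 p3 p4].
have e1 : A *m (1%:M - Pd *m P) = 0.
  apply: (null_mx hN); by rewrite mulmxBr mulmx1 mulmxA p1 subrr.
have e2 : P *m (1%:M - Ad *m A) = 0.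
  apply: (null_mx (A := P) (P := A)); first by move=> x; split => /(hN x).
  by rewrite mulmxBr mulmx1 mulmxA a1 subrr.
have f1 : A = A *m (Pd *m P) by move/eqP: e1; rewrite mulmxBr mulmx1 subr_eq0 => /eqP.
have f2 : P = P *m (Ad *m A) by move/eqP: e2; rewrite mulmxBr mulmx1 subr_eq0 => /eqP.
have g1 : Ad *m A = Ad *m A *m (Pd *m P) by rewrite -mulmxA -f1.
have g2 : Pd *m P = Pd *m P *m (Ad *m A) by rewrite -mulmxA -f2.
have hR' : same_range P A by move=> y; split => /(hR y).
have f3 : A = P *m Pd *m A by rewrite range_mx.
have f4 : P = A *m Ad *m P by rewrite range_mx.
split.
  apply/esym; rewrite -{1}a4 {1}g1 trmx_mul p4 a4 -g2 //.
have h3 : A *m Ad = P *m Pd *m (A *m Ad) by rewrite mulmxA -f3.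
have h4 : P *m Pd = A *m Ad *m (P *m Pd) by rewrite mulmxA -f4.
apply/esym; rewrite -{1}a3 {1}h3 trmx_mul a3 p3 -h4 //.
Qed.

End P8.

Section P9.
Variable R : realType.

Lemma mxE_sub m n (A B : 'M[R]_(m,n)) i j : (A - B) i j = A i j - B i j.
Proof. by rewrite !mxE. Qed.
Lemma mxE_add m n (A B : 'M[R]_(m,n)) i j : (A + B) i j = A i j + B i j.
Proof. by rewrite !mxE. Qed.

Lemma conv_abs n m (X Y : 'M[R]_n) (Pd Ad : 'M[R]_(n,m)) (N : 'M[R]_(m,n)) :
  mx_nonneg X -> mx_nonneg Y -> mx_nonneg Pd -> mx_nonneg Ad ->
  X + Y = Pd *m N -> Ad - (X + Y) *m Ad = Pd ->
  spectral_radius (block_mx X Y 1%:M 0) < 1.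
Proof.
move=> hX hY hPd hAd eG eP.
apply: sr_lt => // z zin; rewrite ltNge; apply/negP => hz.
have hW : mx_nonneg (block_mx X Y 1%:M 0) by apply: nn_block => //; [exact: nn1 | exact: nn0].
have [v hv vn0] := eig_vec zin.
have [hw [j0 hj0] hwB] := absvec hW hv vn0.
move: hw hj0 hwB; set w := \row_j complex.Re `|v 0 j| => hw hj0 hwB.
move: hz hwB; move: (complex.Re `|z|) => rz hz hwB.
set w1 := lsubmx w; set w2 := rsubmx w.
have hwW : w *m block_mx X Y 1%:M 0 = row_mx (w1 *m X + w2) (w1 *m Y).
  by rewrite -{1}(hsubmxK w) mul_row_block mulmx1 mulmx0 addr0.
have ew1 : forall k, w 0 (lshift n k) = w1 0 k by move=> k; rewrite /w1 [RHS]mxE.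
have ew2 : forall k, w 0 (rshift n k) = w2 0 k by move=> k; rewrite /w2 [RHS]mxE.
have hw1 : forall k, 0 <= w1 0 k by move=> k; rewrite -ew1.
have hw2 : forall k, 0 <= w2 0 k by move=> k; rewrite -ew2.
have h1 : forall k, rz * w1 0 k <= (w1 *m X) 0 k + w2 0 k.
  move=> k; have := hwB (lshift n k); rewrite hwW row_mxEl ew1.
  by rewrite mxE_add.
have h2 : forall k, rz * w2 0 k <= (w1 *m Y) 0 k.
  by move=> k; have := hwB (rshift n k); rewrite hwW row_mxEr ew2.
have hG : forall k, w1 0 k <= (w1 *m (X + Y)) 0 k.
  move=> k; rewrite mulmxDr mxE_add.
  have := h1 k; have := h2 k; have := hw1 k; have := hw2 k; nra.
have hPd0 : w1 *m Pd = 0.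
  apply/matrixP => i j; rewrite (ord1 i) [RHS]mxE.
  apply/le_anti/andP; split; last by apply: nn_mul => // a b; rewrite (ord1 a); exact: hw1.
  rewrite -eP mulmxBr mxE_sub subr_le0 mulmxA.
  rewrite [(w1 *m Ad) 0 j]mxE [(w1 *m (X + Y) *m Ad) 0 j]mxE.
  apply: ler_sum => l _; apply: ler_wpM2r => //; rewrite (ord1 i); exact: hG.
have hy0 : w1 = 0.
  apply/matrixP => i k; rewrite (ord1 i) [RHS]mxE.
  apply/le_anti/andP; split; last exact: hw1.
  apply: le_trans (hG k) _; by rewrite eG mulmxA hPd0 mul0mx mxE.
have hw20 : w2 = 0.
  apply/matrixP => i k; rewrite (ord1 i) [RHS]mxE.
  apply/le_anti/andP; split; last exact: hw2.
  have := h2 k; rewrite hy0 mul0mx !mxE => h; nra.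
move: hj0; rewrite -(hsubmxK w) -/w1 -/w2 hy0 hw20 row_mx0 mxE.
by rewrite ltxx.
Qed.

End P9.

Unset Implicit Arguments.
Lemma mxE_sub' (R : realType) m n (A B : 'M[R]_(m,n)) i j : (A - B) i j = A i j - B i j.
Proof. by rewrite !mxE. Qed.
Lemma mxE_add' (R : realType) m n (A B : 'M[R]_(m,n)) i j : (A + B) i j = A i j + B i j.
Proof. by rewrite !mxE. Qed.
Lemma mxE_scale (R : realType) m n a (A : 'M[R]_(m,n)) i j : (a *: A) i j = a * A i j.
Proof. by rewrite !mxE. Qed.

Theorem theorem3p1 (R : realType) (m n : nat)
  (A : 'M[R]_(m, n)) (Ad : 'M[R]_(n, m))
  (P1 R1 S1 : 'M[R]_(m, n)) (P1d : 'M[R]_(n, m))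
  (P2 R2 S2 : 'M[R]_(m, n)) (P2d : 'M[R]_(n, m)) :
  is_MP_inverse A Ad -> mx_nonneg Ad ->
  (* A = P1 - R1 + S1 regular proper double splitting, with P1 P1^+ >= 0 *)
  proper_double_splitting A P1 R1 S1 -> is_MP_inverse P1 P1d ->
  mx_nonneg P1d -> mx_nonneg R1 -> mx_nonneg (- S1) ->
  mx_nonneg (P1 *m P1d) ->
  (* A = P2 - R2 + S2 weak regular proper double splitting *)
  proper_double_splitting A P2 R2 S2 -> is_MP_inverse P2 P2d ->
  mx_nonneg P2d -> mx_nonneg (P2d *m R2) -> mx_nonneg (- (P2d *m S2)) ->
  (* comparison hypotheses *)
  mx_nonneg (P1d - P2d) ->
  (mx_nonneg (P1d *m R1 - P2d *m R2) \/ mx_nonneg (P1d *m S1 - P2d *m S2)) ->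
  let W1 : 'M[R]_(n + n) := block_mx (P1d *m R1) (- (P1d *m S1)) 1%:M 0 in
  let W2 : 'M[R]_(n + n) := block_mx (P2d *m R2) (- (P2d *m S2)) 1%:M 0 in
  spectral_radius W1 <= spectral_radius W2 /\ spectral_radius W2 < 1.
Proof.
move=> hA hAd hs1 hP1 hP1d hR1 hS1 hPP1 hs2 hP2 hP2d hX2 hY2 hcmp hor W1 W2.
case: (hs1) => eA1 hr1 hn1; case: (hs2) => eA2 hr2 hn2.
have [q1 q1'] := proj hA hr1 hn1 hP1.
have [q2 q2'] := proj hA hr2 hn2 hP2.
case: (hA) => a1 a2 a3 a4; case: (hP1) => p11 p12 p13 p14; case: (hP2) => p21 p22 p23 p24.
have eN1 : P1 - A = R1 - S1.
  have -> : A = P1 - (R1 - S1) by rewrite eA1 opprB addrA addrAC.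
  by rewrite subKr.
have eN2 : P2 - A = R2 - S2.
  have -> : A = P2 - (R2 - S2) by rewrite eA2 opprB addrA addrAC.
  by rewrite subKr.
have eG1 : P1d *m R1 - P1d *m S1 = Ad *m A - P1d *m A by rewrite -mulmxBr -eN1 mulmxBr q1.
have eG2 : P2d *m R2 - P2d *m S2 = Ad *m A - P2d *m A by rewrite -mulmxBr -eN2 mulmxBr q2.
have eGA1 : (Ad *m A - P1d *m A) *m Ad = Ad - P1d.
  by rewrite mulmxBl a2 -mulmxA -q1' mulmxA p12.
have eGA2 : (Ad *m A - P2d *m A) *m Ad = Ad - P2d.
  by rewrite mulmxBl a2 -mulmxA -q2' mulmxA p22.
have hY1 : mx_nonneg (- (P1d *m S1)) by rewrite -mulmxN; apply: nn_mul.
have hX1 : mx_nonneg (P1d *m R1) by apply: nn_mul.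
have conv2 : spectral_radius W2 < 1.
  apply: (@conv_abs R n m _ _ P2d Ad (R2 - S2)) => //.
    by rewrite mulmxBr.
  by rewrite eG2 eGA2 opprB addrC subrK.
have conv1 : spectral_radius W1 < 1.
  apply: (@conv_abs R n m _ _ P1d Ad (R1 - S1)) => //.
    by rewrite mulmxBr.
  by rewrite eG1 eGA1 opprB addrC subrK.
split => //.
case: (Order.TotalTheory.leP (spectral_radius W1) 0) => h0.
  exact: le_trans h0 (sr_ge0 W2).
have hW1 : mx_nonneg W1 by apply: nn_block => //; [exact: nn1 | exact: nn0].
have hW2 : mx_nonneg W2 by apply: nn_block => //; [exact: nn1 | exact: nn0].
have [x [hx xn0] hWx] := pf hW1 h0.
move: h0 conv1 hWx; move: (spectral_radius W1) => r r0 r1 hWx.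
rewrite /W1 in hWx.
set X1 := P1d *m R1 in hX1 hWx eG1 *; set Y1 := - (P1d *m S1) in hY1 hWx eG1 *.
set X2 := P2d *m R2 in hX2 eG2 *; set Y2 := - (P2d *m S2) in hY2 eG2 *.
set u := usubmx x; set v := dsubmx x.
have ex : x = col_mx u v by rewrite vsubmxK.
rewrite ex mul_block_col mul1mx mul0mx addr0 scale_col_mx in hWx.
have [e1 e2] := eq_col_mx hWx.
have hu : mx_nonneg u by move=> i j; rewrite mxE; exact: hx.
have hv : mx_nonneg v by move=> i j; rewrite mxE; exact: hx.
have hv2 : r^+2 *: v = P1d *m (r *: (R1 *m v) - S1 *m v).
  rewrite expr2 -scalerA -e2 -e1 e2 /X1 /Y1 -scalemxAr mulNmx -!mulmxA mulmxBr.
  by rewrite -scalemxAr.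
have NR : P1 *m P1d *m (R1 - S1) = R1 - S1 by rewrite -eN1 mulmxBr p11 q1' a1.
have eA' : A = P1 - (R1 - S1) by rewrite eA1 opprB addrA addrAC.
have t1 : r^+2 *: (P1 *m v) = P1 *m P1d *m (r *: (R1 *m v) - S1 *m v).
  by rewrite scalemxAr hv2 mulmxA.
have t2 : r^+2 *: ((R1 - S1) *m v) = P1 *m P1d *m (r^+2 *: ((R1 - S1) *m v)).
  by rewrite -scalemxAr mulmxA NR.
set Z := (r - r^+2) *: (R1 *m v) + (1 - r^+2) *: ((- S1) *m v).
have eZ : r *: (R1 *m v) - S1 *m v - r^+2 *: ((R1 - S1) *m v) = Z.
  rewrite /Z mulmxBl mulNmx; move: (R1 *m v) (S1 *m v) => a b.
  apply/matrixP => i j; rewrite !mxE; ring.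
have Av2 : r^+2 *: (A *m v) = P1 *m P1d *m Z.
  by rewrite {1}eA' mulmxBl scalerBr t1 t2 -mulmxBr eZ.
have hZ : mx_nonneg Z.
  apply: nn_add; apply: nn_scale; rewrite ?subr_ge0; try (apply: nn_mul => //).
    by rewrite expr2 ler_piMl // ltW.
  by rewrite expr2 mulr_ile1 // ltW.
have hAv : mx_nonneg (A *m v).
  move=> i j; have : 0 <= (r^+2 *: (A *m v)) i j by rewrite Av2; apply: nn_mul.
  by rewrite mxE_scale pmulr_rge0 // exprn_gt0.
have hg : (X2 *m v + Y2 *m v) - (X1 *m v + Y1 *m v) = (P1d - P2d) *m (A *m v).
  rewrite -!mulmxDl -mulmxBl eG2 eG1 mulmxA; congr (_ *m _).
  by rewrite mulmxBl opprB addrC addrA subrK.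
have hgn : mx_nonneg ((P1d - P2d) *m (A *m v)) by apply: nn_mul.
apply: (cw hW2 hx xn0) => i.
rewrite ex /W2 mul_block_col mul1mx mul0mx addr0.
case: (split_ordP i) => k ->; rewrite ?col_mxEu ?col_mxEd; last first.
  by rewrite e2 mxE_scale.
move/matrixP: e1 => /(_ k 0); rewrite mxE_add mxE_scale => f1.
move/matrixP: hg => /(_ k 0); rewrite mxE_sub' !mxE_add' => fg.
have g0 := hgn k 0; rewrite -fg in g0.
rewrite -/X2 -/Y2.
have su : forall M : 'M[R]_n, (M *m u) k 0 = r * (M *m v) k 0.
  by move=> M; rewrite e2 -scalemxAr mxE_scale.
rewrite su; rewrite su in f1.
case: hor => hc.
  have c0 : 0 <= ((X1 - X2) *m v) k 0 by apply: nn_mul.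
  rewrite mulmxBl mxE_sub' in c0.
  nra.
have c0 : 0 <= ((Y2 - Y1) *m v) k 0.
  apply: nn_mul => //; by rewrite /Y1 /Y2 opprK addrC.
rewrite mulmxBl mxE_sub' in c0.
nra.
Qed.
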